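(* Let $L\geq1$ be an integer, $P\geq0$, $p_B\in[0,1]$, and $\alpha\sim\mathrm{Binomial}(L,1-p_B)$. For integers $i\geq0$ let $\bar R(i):=\mathbb{E}\big[\log\big(1+|\sum_{l=1}^i e^{j\theta_l}|^2P\big)\big]$ with $\theta_1,\theta_2,\ldots$ i.i.d. $\mathrm{Uniform}(0,2\pi)$, and let $\bar R_{\mathrm{out}}:=\sup_{r\in\mathbb{R}}r\cdot\mathbb{P}(\bar R(\alpha)\geq r)$. Then $$\bar R_{\mathrm{out}}\geq\mathbb{P}(\alpha\geq1)\bar R(1)=(1-p_B^L)\log(1+P).$$
   Context: $\bar R$ is a deterministic function (expectation over the $\theta_l$ only). $\log$ is the logarithm in a fixed base. *)

(* Defs.v *)
From HB Require Import structures.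
From mathcomp Require Import all_boot all_order all_algebra.
From mathcomp Require Import all_classical all_reals all_analysis.
Set Implicit Arguments. Unset Strict Implicit. Unset Printing Implicit Defensive.
Import Order.TTheory GRing.Theory Num.Theory.
Local Open Scope classical_set_scope.
Local Open Scope ring_scope.

Definition logb {R : realType} (b x : R) : R := ln x / ln b.

(* F i (x,y) = E[ log_b (1 + |(x + j y) + sum_{l=1}^i e^{j theta_l}|^2 P) ]
   with theta_1..theta_i i.i.d. Uniform(0,2pi); computed as the iterated
   expectation: each step averages over one uniform angle. *)
Fixpoint Fexp {R : realType} (b P : R) (i : nat) (x y : R) : R :=
  match i with
  | 0 => logb b (1 + (x ^+ 2 + y ^+ 2) * P)
  | i'.+1 => (2 * pi)^-1 *
      Rintegral (@lebesgue_measure R) `[0, 2 * pi]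
        (fun t : R => Fexp b P i' (x + cos t) (y + sin t))
  end.

Definition Rbar {R : realType} (b P : R) (i : nat) : R := Fexp b P i 0 0.

Definition binom_pmf {R : realType} (L : nat) (q : R) (k : nat) : R :=
  'C(L, k)%:R * q ^+ k * (1 - q) ^+ (L - k).

Definition prob_rate_ge {R : realType} (b P pB : R) (L : nat) (r : R) : R :=
  \sum_(k < L.+1) binom_pmf L (1 - pB) k * ((r <= Rbar b P k)%R)%:R.

Definition prob_alpha_ge1 {R : realType} (pB : R) (L : nat) : R :=
  \sum_(k < L.+1 | (1 <= k)%N) binom_pmf L (1 - pB) k.

Definition Rout {R : realType} (b P pB : R) (L : nat) : \bar R :=
  ereal_sup [set (r * prob_rate_ge b P pB L r)%:E | r in [set: R]].

(* Main.v *)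
Require Import Defs.
From mathcomp Require Import all_boot all_order all_algebra.
From mathcomp Require Import all_classical all_reals all_analysis.
From mathcomp Require Import ring lra.
Import Order.TTheory GRing.Theory Num.Theory numFieldNormedType.Exports.
Local Open Scope ring_scope.
Set Implicit Arguments. Unset Strict Implicit.

Section Helpers.
Variable R : realType.
Notation mu := (@lebesgue_measure R).
Local Open Scope classical_set_scope.

Lemma cD (f g : R -> R) : continuous f -> continuous g -> continuous (fun t => f t + g t).
Proof. by move=> cf cg t; apply: (@continuousD _ _ _ f g t (cf t) (cg t)). Qed.
Lemma cM (f g : R -> R) : continuous f -> continuous g -> continuous (fun t => f t * g t).
Proof. by move=> cf cg t; apply: (@continuousM _ _ f g t (cf t) (cg t)). Qed.
Lemma cC (a : R) : continuous (fun t : R => a).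
Proof. by move=> t; exact: cvg_cst. Qed.
Lemma cI : continuous (fun t : R => t).
Proof. by move=> t; exact: cvg_id. Qed.
Lemma cX2 (f : R -> R) : continuous f -> continuous (fun t => f t ^+ 2).
Proof. by move=> cf; under eq_fun do rewrite expr2; apply: (cM cf cf). Qed.
Lemma cln (f : R -> R) : continuous f -> (forall t, 0 < f t) -> continuous (fun t => ln (f t)).
Proof. move=> cf fp t. apply: (continuous_comp (cf t)). exact: continuous_ln. Qed.
Lemma caff (g : R -> R) (k c : R) : continuous g -> continuous (fun t => g (k * t + c)).
Proof.
move=> cg t; apply: (continuous_comp (f := fun t : R => k * t + c)); last exact: cg.
by apply: cD; [apply: cM; [exact: cC| exact: cI] | exact: cC].
Qed.

Lemma aff_derive (k c : R) : (fun x : R => k * x + c)^`() = cst k.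
Proof.
apply/funext => z; rewrite derive1E.
have H : is_derive z 1 (fun x : R => k * x + c) (k * 1 + 0).
  apply: is_deriveD.
rewrite derive_val. by rewrite mulr1 addr0.
Qed.

Lemma aff_subst (g : R -> R) (k c a b : R) : 0 < k -> a <= b -> continuous g ->
 (\int[mu]_(x in `[(k*a + c)%R, (k*b + c)%R]) (g x)%:E =
  \int[mu]_(x in `[a,b]) ((g (k*x+c)) * k)%R%:E)%E.
Proof.
move=> k0 ab cg.
rewrite (@integration_by_substitution_increasing R (fun x => k * x + c) g a b) //.
- by apply: eq_integral => x _; rewrite aff_derive.
- by move=> x y _ _ xy; rewrite ltrD2r ltr_pM2l.
- by rewrite aff_derive => ? _; exact: cvg_cst.
- by rewrite aff_derive; exact: is_cvg_cst.
- by rewrite aff_derive; exact: is_cvg_cst.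
- have cF : continuous (fun x : R => k * x + c).
    by apply: cD; [apply: cM; [exact: cC| exact: cI] | exact: cC].
  split.
  + move=> x _; apply: derivableD => //; apply: derivableM => //; exact: derivable_id.
  + apply: cvg_at_right_filter; exact: cF.
  + apply: cvg_at_left_filter; exact: cF.
- exact: continuous_subspaceT.
Qed.

Lemma cint (g : R -> R) a b : continuous g -> mu.-integrable `[a, b] (EFin \o g).
Proof.
move=> cg; apply: continuous_compact_integrable; [exact: segment_compact | exact: continuous_subspaceT].
Qed.

Lemma Raff (g : R -> R) k c a b : 0 < k -> a <= b -> continuous g ->
  \int[mu]_(x in `[(k*a + c)%R, (k*b + c)%R]) g x = \int[mu]_(x in `[a,b]) (g (k*x+c) * k).
Proof. by move=> k0 ab cg; rewrite /Rintegral aff_subst. Qed.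

Lemma Rsplit (g : R -> R) a m b : a <= m -> m <= b -> continuous g ->
  \int[mu]_(x in `[a, b]) g x = \int[mu]_(x in `[a, m]) g x + \int[mu]_(x in `[m, b]) g x.
Proof.
move=> am mb cg.
have := @Rintegral_itvB R g (BLeft a) (BRight b) m (cint a b cg).
rewrite !bnd_simp => /(_ am mb) H.
rewrite -[X in _ = _ + X]Rintegral_itv_obnd_cbnd; last first.
  apply: integrableS (cint m b cg) => //.
  by move=> x /=; rewrite !in_itv /= => /andP[mx ->]; rewrite (ltW mx).
by rewrite -H addrC subrK.
Qed.

Lemma Rperiod (g : R -> R) c : continuous g -> (forall t, g (t + 2 * pi) = g t) ->
  0 <= c -> c <= 2 * pi ->
  \int[mu]_(x in `[c, c + 2 * pi]) g x = \int[mu]_(x in `[0, 2 * pi]) g x.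
Proof.
move=> cg gp c0 c2.
rewrite (@Rsplit g c (2 * pi)) //; last by rewrite lerDr.
have := @Raff g 1 (2 * pi) 0 c ltr01 c0 cg.
rewrite !mul1r add0r => ->.
have -> : \int[mu]_(x in `[0, c]) (g (1 * x + 2 * pi) * 1) = \int[mu]_(x in `[0, c]) g x.
  by apply: eq_Rintegral => x _; rewrite mul1r mulr1 gp.
by rewrite [RHS](@Rsplit g 0 c) // addrC.
Qed.


Lemma cosDpi (t : R) : cos (t + pi) = - cos t.
Proof. by rewrite cosD cospi sinpi mulr0 subr0 mulrN1. Qed.
Lemma sinDpi (t : R) : sin (t + pi) = - sin t.
Proof. by rewrite sinD cospi sinpi mulr0 addr0 mulrN1. Qed.
Lemma cosD2pi (t : R) : cos (t + 2 * pi) = cos t.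
Proof. have -> : t + 2 * pi = (t + pi) + pi by ring. by rewrite !cosDpi opprK. Qed.
Lemma sinD2pi (t : R) : sin (t + 2 * pi) = sin t.
Proof. have -> : t + 2 * pi = (t + pi) + pi by ring. by rewrite !sinDpi opprK. Qed.

Definition q (b c t : R) := 1 + (b ^+ 2 + c ^+ 2) + 2 * (b * cos t + c * sin t).
Definition Jf (b c t : R) := ln (q b c t).
Definition J (b c : R) := \int[mu]_(t in `[0, 2 * pi]) Jf b c t.

Lemma q_lb b c t : b ^+ 2 + c ^+ 2 < 1 -> (1 - (b ^+ 2 + c ^+ 2)) ^+ 2 / 4 <= q b c t.
Proof.
move=> H; rewrite /q.
set r := b ^+ 2 + c ^+ 2 in H *; set L := b * cos t + c * sin t.
have e := cos2Dsin2 t.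
have HL : L ^+ 2 <= r.
  have -> : r = r * (cos t ^+ 2 + sin t ^+ 2) by rewrite e mulr1.
  have h := sqr_ge0 (b * sin t - c * cos t).
  rewrite /L /r; nra.
have r0 : 0 <= r by rewrite /r addr_ge0 // sqr_ge0.
have h1 : 0 <= 1 + r + 2 * L by nra.
have h2 : (1 - r) / 2 <= 1 + L by lra.
have h20 : 0 <= (1 - r) / 2 by lra.
have h3 : ((1 - r) / 2) ^+ 2 <= (1 + L) ^+ 2 by nra.
have -> : (1 - r) ^+ 2 / 4 = ((1 - r) / 2) ^+ 2 by field.
nra.
Qed.

Lemma q_pos b c t : b ^+ 2 + c ^+ 2 < 1 -> 0 < q b c t.
Proof.
move=> H; apply: lt_le_trans (q_lb t H).
have : 0 < 1 - (b ^+ 2 + c ^+ 2) by lra.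
move=> h; apply: divr_gt0 => //; exact: exprn_gt0.
Qed.

Lemma cq b c : continuous (q b c).
Proof.
apply: cD; first exact: cC.
apply: cM; first exact: cC.
apply: cD; apply: cM; (try exact: cC); [exact: continuous_cos | exact: continuous_sin].
Qed.

Lemma cJf b c : b ^+ 2 + c ^+ 2 < 1 -> continuous (Jf b c).
Proof. by move=> H; apply: cln; [exact: cq | move=> t; exact: q_pos]. Qed.

Lemma Jf_per b c t : Jf b c (t + 2 * pi) = Jf b c t.
Proof. by rewrite /Jf /q cosD2pi sinD2pi. Qed.

Lemma Jf_shift b c t : Jf b c (t + pi) = Jf (- b) (- c) t.
Proof. by rewrite /Jf /q cosDpi sinDpi; congr ln; ring. Qed.

Lemma pi2_ge : pi <= 2 * pi :> R.
Proof. have := @pi_gt0 R; lra. Qed.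

Lemma J_neg b c : b ^+ 2 + c ^+ 2 < 1 -> J (- b) (- c) = J b c.
Proof.
move=> H; rewrite /J.
have -> : \int[mu]_(t in `[0, 2 * pi]) Jf (- b) (- c) t =
          \int[mu]_(t in `[0, 2 * pi]) (Jf b c (1 * t + pi) * 1).
  by apply: eq_Rintegral => t _; rewrite mul1r mulr1 Jf_shift.
have h2 : 0 <= 2 * pi :> R by have := @pi_gt0 R; lra.
have cj := cJf H.
rewrite -Raff //.
rewrite mul1r mul1r add0r [2 * pi + pi]addrC.
apply: Rperiod => //; by [exact: Jf_per | exact: ltW (@pi_gt0 R) | exact: pi2_ge].
Qed.


Lemma dbl_id (b c C S : R) : C ^+ 2 + S ^+ 2 = 1 ->
  (1 + (b ^+ 2 + c ^+ 2) + 2 * (b * C + c * S)) *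
  (1 + ((- b) ^+ 2 + (- c) ^+ 2) + 2 * ((- b) * C + (- c) * S)) =
  1 + ((c ^+ 2 - b ^+ 2) ^+ 2 + (- (2 * b * c)) ^+ 2) +
  2 * ((c ^+ 2 - b ^+ 2) * (C * C - S * S) + (- (2 * b * c)) * (S * C + C * S)).
Proof.
move=> e.
have -> : (1 + (b ^+ 2 + c ^+ 2) + 2 * (b * C + c * S)) *
  (1 + ((- b) ^+ 2 + (- c) ^+ 2) + 2 * ((- b) * C + (- c) * S)) =
  1 + ((c ^+ 2 - b ^+ 2) ^+ 2 + (- (2 * b * c)) ^+ 2) +
  2 * ((c ^+ 2 - b ^+ 2) * (C * C - S * S) + (- (2 * b * c)) * (S * C + C * S))
  + (- 2 * (b ^+ 2 + c ^+ 2)) * (C ^+ 2 + S ^+ 2 - 1) by ring.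
by rewrite e subrr mulr0 addr0.
Qed.

Lemma rN (b c : R) : (- b) ^+ 2 + (- c) ^+ 2 = b ^+ 2 + c ^+ 2 :> R.
Proof. by rewrite !sqrrN. Qed.

Lemma r_dbl (b c : R) : b ^+ 2 + c ^+ 2 < 1 ->
  (c ^+ 2 - b ^+ 2) ^+ 2 + (- (2 * b * c)) ^+ 2 <= b ^+ 2 + c ^+ 2.
Proof.
move=> H.
have -> : (c ^+ 2 - b ^+ 2) ^+ 2 + (- (2 * b * c)) ^+ 2 = (b ^+ 2 + c ^+ 2) ^+ 2 by ring.
have h0 : 0 <= b ^+ 2 + c ^+ 2 by rewrite addr_ge0 // sqr_ge0.
nra.
Qed.

Lemma Jf_dbl (b c t : R) : b ^+ 2 + c ^+ 2 < 1 ->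
  Jf b c t + Jf (- b) (- c) t = Jf (c ^+ 2 - b ^+ 2) (- (2 * b * c)) (2 * t).
Proof.
move=> H; rewrite /Jf -lnM ?posrE; last 2 first.
- exact: q_pos.
- by apply: q_pos; rewrite rN.
congr ln; rewrite /q (_ : 2 * t = t + t); last by ring.
rewrite cosD sinD; exact: dbl_id (cos2Dsin2 t).
Qed.

Lemma two_gt0 : 0 < 2 :> R. Proof. by []. Qed.
Lemma pi2_ge0 : 0 <= 2 * pi :> R. Proof. have := @pi_gt0 R; lra. Qed.
Lemma pi4_ge : 2 * pi <= 2 * pi + 2 * pi :> R. Proof. have := @pi_gt0 R; lra. Qed.
Lemma lin_aux (x y : R) : (x + x) * 2 = y + y -> 2 * x = y. Proof. lra. Qed.

Lemma J_dbl (b c : R) : b ^+ 2 + c ^+ 2 < 1 ->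
  2 * J b c = J (c ^+ 2 - b ^+ 2) (- (2 * b * c)).
Proof.
move=> H.
set b' := c ^+ 2 - b ^+ 2; set c' := - (2 * b * c).
have H' : b' ^+ 2 + c' ^+ 2 < 1 by apply: le_lt_trans (r_dbl H) H.
have HN : (- b) ^+ 2 + (- c) ^+ 2 < 1 by rewrite rN.
have pi0 := @pi_gt0 R.
have e1 : J b c + J (- b) (- c) = \int[mu]_(t in `[0, 2 * pi]) Jf b' c' (2 * t).
  rewrite /J -RintegralD //; last 2 first.
  - exact: cint (cJf H).
  - exact: cint (cJf HN).
  by apply: eq_Rintegral => t _; rewrite Jf_dbl.
have cg : continuous (fun t : R => Jf b' c' (2 * t + 0)) by apply: caff; exact: cJf.
have e2 : \int[mu]_(t in `[0, 2 * pi]) Jf b' c' (2 * t) * 2 =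
          \int[mu]_(t in `[0, 2 * pi]) (Jf b' c' (2 * t + 0) * 2).
  rewrite -RintegralZr //; last by apply: cint; under eq_fun do rewrite -(addr0 (2 * _)); exact: cg.
  by apply: eq_Rintegral => t _; rewrite addr0.
have cJ' := cJf H'.
clearbody b' c'.
have e3 : \int[mu]_(t in `[0, 2 * pi]) (Jf b' c' (2 * t + 0) * 2) =
   \int[mu]_(x in `[(2 * 0 + 0)%R, (2 * (2 * pi) + 0)%R]) Jf b' c' x.
  by symmetry; apply: Raff; by [exact: two_gt0 | exact: pi2_ge0 | exact: cJf].
rewrite (_ : 2 * 0 + 0 = 0) in e3; last by ring.
rewrite (_ : 2 * (2 * pi) + 0 = 2 * pi + 2 * pi) in e3; last by ring.
have e4 : \int[mu]_(x in `[0, 2 * pi + 2 * pi]) Jf b' c' x = J b' c' + J b' c'.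
  rewrite (@Rsplit _ 0 (2 * pi) (2 * pi + 2 * pi)) //; last 2 first.
  - exact: pi2_ge0.
  - exact: pi4_ge.
  by rewrite Rperiod //; by [exact: Jf_per | exact: pi2_ge0 | exact: lexx].
rewrite e4 in e3.
rewrite -e1 J_neg // e3 in e2.
exact: lin_aux.
Qed.


Lemma mu02 : fine (mu `[0, 2 * pi]) = 2 * pi.
Proof.
rewrite lebesgue_measure_itv/= lte_fin.
have -> : (0 < 2 * pi :> R) by have := @pi_gt0 R; lra.
by rewrite /= oppr0 addr0.
Qed.

Lemma J_lb (b c : R) : b ^+ 2 + c ^+ 2 < 1 ->
  2 * pi * ln ((1 - (b ^+ 2 + c ^+ 2)) ^+ 2 / 4) <= J b c.
Proof.
move=> H.
have h := @le_Rintegral _ _ _ mu `[0, 2 * pi] (fun=> ln ((1 - (b ^+ 2 + c ^+ 2)) ^+ 2 / 4)) (Jf b c)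
  (measurable_itv _) (cint _ _ (@cC _)) (cint _ _ (cJf H)).
rewrite Rintegral_cst // mu02 in h.
rewrite [X in X <= _]mulrC; apply: h => t _ /=.
have h1 : 0 < 1 - (b ^+ 2 + c ^+ 2) by lra.
rewrite /Jf ler_ln ?posrE; first exact: q_lb.
- by apply: divr_gt0 => //; exact: exprn_gt0.
- exact: q_pos.
Qed.

Lemma J_iter n : forall (b c r0 : R), b ^+ 2 + c ^+ 2 <= r0 -> r0 < 1 ->
  2 * pi * ln ((1 - r0) ^+ 2 / 4) <= J b c * 2 ^+ n.
Proof.
elim: n => [|n IH] b c r0 Hr Hr0.
  rewrite expr0 mulr1.
  have H : b ^+ 2 + c ^+ 2 < 1 by apply: le_lt_trans Hr Hr0.
  apply: le_trans (J_lb H).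
  have p0 := @pi_gt0 R.
  rewrite ler_pM2l; last by lra.
  have h0 : 0 <= b ^+ 2 + c ^+ 2 by rewrite addr_ge0 // sqr_ge0.
  have h1 : 0 < 1 - r0 by lra.
  rewrite ler_ln ?posrE.
  - have h2 : (1 - r0) ^+ 2 <= (1 - (b ^+ 2 + c ^+ 2)) ^+ 2 by nra.
    by rewrite ler_pM2r.
  - by apply: divr_gt0 => //; exact: exprn_gt0.
  - by apply: divr_gt0 => //; apply: exprn_gt0; lra.
have H : b ^+ 2 + c ^+ 2 < 1 by apply: le_lt_trans Hr Hr0.
rewrite [2 ^+ n.+1]exprS mulrA (mulrC (J b c)) J_dbl //.
apply: IH => //.
exact: le_trans (r_dbl H) Hr.
Qed.

Lemma nat_lt_pow2 n : (n%:R : R) < 2 ^+ n.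
Proof. by rewrite -natrX ltr_nat ltn_expl. Qed.

Lemma J_ge0 (b c : R) : b ^+ 2 + c ^+ 2 < 1 -> 0 <= J b c.
Proof.
move=> H.
have hK := fun n => @J_iter n b c _ (lexx _) H.
set K := 2 * pi * ln ((1 - (b ^+ 2 + c ^+ 2)) ^+ 2 / 4) in hK.
rewrite leNgt; apply/negP => Jn.
set x := K / J b c.
have hx := archi_boundP (normr_ge0 x).
set n := Num.Def.archi_bound `|x| in hx.
have h2 := nat_lt_pow2 n.
have h3 := hK n.
have ex : K = x * J b c by rewrite /x divfK // ltr0_neq0.
have hxa : x <= `|x| := ler_norm x.
move: h2 h3 hx hxa Jn; rewrite ex.
clearbody x n; move: (J b c) => j.
set p := (2 : R) ^+ n. set m := (n%:R : R).
clearbody p m; move=> *; nra.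
Qed.


Lemma cq2 (x y P : R) : continuous (fun t : R => 1 + ((x + cos t)^+2 + (y + sin t)^+2) * P).
Proof.
apply: cD; first exact: cC.
apply: cM; last exact: cC.
apply: cD; apply: cX2; apply: cD; (try exact: cC); [exact: continuous_cos | exact: continuous_sin].
Qed.

Lemma circ_ge1 (x y P t : R) : 0 <= P -> 1 <= 1 + ((x + cos t)^+2 + (y + sin t)^+2) * P.
Proof.
move=> hP; rewrite lerDl; apply: mulr_ge0 => //; apply: addr_ge0; exact: sqr_ge0.
Qed.

Lemma clncirc (x y P : R) : 0 <= P ->
  continuous (fun t : R => ln (1 + ((x + cos t)^+2 + (y + sin t)^+2) * P)).
Proof.
move=> hP; apply: cln; first exact: cq2.
by move=> t; apply: lt_le_trans (circ_ge1 x y t hP).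
Qed.

Lemma pt_id (x y P c t : R) : c != 0 ->
  c ^+ 2 - (1 + P * (x ^+ 2 + y ^+ 2 + 1)) * c + P ^+ 2 * (x ^+ 2 + y ^+ 2) = 0 ->
  1 + ((x + cos t)^+2 + (y + sin t)^+2) * P = c * q (P * x / c) (P * y / c) t.
Proof.
move=> c0 ceq.
have -> : 1 + ((x + cos t)^+2 + (y + sin t)^+2) * P = c * q (P * x / c) (P * y / c) t +
  (- (c ^+ 2 - (1 + P * (x ^+ 2 + y ^+ 2 + 1)) * c + P ^+ 2 * (x ^+ 2 + y ^+ 2)) / c
   + P * (cos t ^+ 2 + sin t ^+ 2 - 1)).
  by rewrite /q; field.
by rewrite ceq cos2Dsin2 oppr0 mul0r subrr mulr0 !addr0.
Qed.

Lemma CM_alg (x y P c : R) : 0 <= P -> 0 < c -> 1 + (x ^+ 2 + y ^+ 2) * P <= c ->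
  c ^+ 2 - (1 + P * (x ^+ 2 + y ^+ 2 + 1)) * c + P ^+ 2 * (x ^+ 2 + y ^+ 2) = 0 ->
  P ^+ 2 * (x ^+ 2 + y ^+ 2) < c ^+ 2 ->
  2 * pi * ln (1 + (x ^+ 2 + y ^+ 2) * P) <=
  \int[mu]_(t in `[0, 2 * pi]) ln (1 + ((x + cos t)^+2 + (y + sin t)^+2) * P).
Proof.
move=> hP c0 c1 ceq cr.
have hr : (P * x / c) ^+ 2 + (P * y / c) ^+ 2 < 1.
  have -> : (P * x / c) ^+ 2 + (P * y / c) ^+ 2 = P ^+ 2 * (x ^+ 2 + y ^+ 2) / c ^+ 2.
    by field; rewrite lt0r_neq0.
  by rewrite ltr_pdivrMr ?mul1r // exprn_gt0.
have e : \int[mu]_(t in `[0, 2 * pi]) ln (1 + ((x + cos t)^+2 + (y + sin t)^+2) * P) =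
         \int[mu]_(t in `[0, 2 * pi]) (ln c + Jf (P * x / c) (P * y / c) t).
  apply: eq_Rintegral => t _.
  rewrite (@pt_id x y P c t) ?lt0r_neq0 // /Jf lnM // posrE //; exact: q_pos.
rewrite e RintegralD //; last 2 first.
- exact: cint (@cC _).
- exact: cint (cJf hr).
rewrite Rintegral_cst // mu02 -/(J _ _).
have hJ := J_ge0 hr.
have hl : ln (1 + (x ^+ 2 + y ^+ 2) * P) <= ln c.
  rewrite ler_ln ?posrE //.
  apply: lt_le_trans ltr01 _; rewrite lerDl; apply: mulr_ge0 => //; apply: addr_ge0; exact: sqr_ge0.
have p0 := @pi_gt0 R.
have : 2 * pi * ln (1 + (x ^+ 2 + y ^+ 2) * P) <= 2 * pi * ln c.
  by rewrite ler_pM2l //; lra.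
move: hJ; move: (J _ _) => j; move: (ln c) (ln _) => a0 a1.
lra.
Qed.

Lemma c_exists (x y P : R) : 0 <= P -> exists c, [/\ 0 < c, 1 + (x ^+ 2 + y ^+ 2) * P <= c,
  c ^+ 2 - (1 + P * (x ^+ 2 + y ^+ 2 + 1)) * c + P ^+ 2 * (x ^+ 2 + y ^+ 2) = 0 &
  P ^+ 2 * (x ^+ 2 + y ^+ 2) < c ^+ 2].
Proof.
move=> hP.
move: (x ^+ 2 + y ^+ 2) (addr_ge0 (sqr_ge0 x) (sqr_ge0 y)) => s hs.
have hD : 0 < (1 + P * (s + 1)) ^+ 2 - 4 * P ^+ 2 * s.
  have -> : (1 + P * (s + 1)) ^+ 2 - 4 * P ^+ 2 * s = (1 + P * s - P) ^+ 2 + 4 * P by ring.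
  rewrite le_eqVlt in hP; case/orP: hP => [/eqP <-|hP].
    by rewrite !mul0r subr0 addr0 expr1n.
  by apply: ltr_wpDl; [exact: sqr_ge0 | lra].
move: (Num.sqrt _) (sqrtr_ge0 ((1 + P * (s + 1)) ^+ 2 - 4 * P ^+ 2 * s))
  (sqr_sqrtr (ltW hD)) => sq sq0 sqe.
exists ((1 + P * (s + 1) + sq) / 2).
have hA : 0 < 1 + P * (s + 1) by have := mulr_ge0 hP (addr_ge0 hs ler01); lra.
have hsq : 1 + P * s - P <= sq.
  have h : (1 + P * s - P) ^+ 2 <= sq ^+ 2 by rewrite sqe; nra.
  nra.
split.
- by lra.
- by lra.
- have -> : ((1 + P * (s + 1) + sq) / 2) ^+ 2 - (1 + P * (s + 1)) * ((1 + P * (s + 1) + sq) / 2) +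
     P ^+ 2 * s = (sq ^+ 2 - ((1 + P * (s + 1)) ^+ 2 - 4 * P ^+ 2 * s)) / 4 by field.
  by rewrite sqe subrr mul0r.
- nra.
Qed.


Lemma mono_int (f g : R -> R) : (forall t, `[0, 2 * pi] t -> 0 <= f t) ->
  (forall t, `[0, 2 * pi] t -> f t <= g t) ->
  (\int[mu]_(t in `[0%R, (2 * pi)%R]) (f t)%:E <= \int[mu]_(t in `[0%R, (2 * pi)%R]) (g t)%:E)%E.
Proof.
move=> f0 fg.
have f0' : forall t, `[0, 2 * pi] t -> (0 <= (f t)%:E)%E by move=> t Dt; rewrite lee_fin; apply: f0.
have g0' : forall t, `[0, 2 * pi] t -> (0 <= (g t)%:E)%E.
  by move=> t Dt; rewrite lee_fin; apply: le_trans (f0 t Dt) (fg t Dt).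
rewrite !ge0_integralE //.
apply: le_ereal_sup => _ [h hf <-]; exists h => //= x.
apply: le_trans (hf x) _; rewrite /patch; case: ifPn => // xD.
by rewrite lee_fin; apply: fg; exact: set_mem.
Qed.

Lemma int_fin (g : R -> R) M : 0 <= M -> (forall t, `[0, 2 * pi] t -> 0 <= g t) ->
  (forall t, `[0, 2 * pi] t -> g t <= M) ->
  (\int[mu]_(t in `[0%R, (2 * pi)%R]) (g t)%:E)%E \is a fin_num.
Proof.
move=> M0 g0 gM.
have hc : (\int[mu]_(t in `[0%R, (2 * pi)%R]) ((fun=> M) t)%:E)%E \is a fin_num.
  by apply: integrable_fin_num => //; exact: (cint 0 (2 * pi) (@cC M)).
rewrite ge0_fin_numE in hc; last by apply: integral_ge0 => t _; rewrite lee_fin.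
rewrite ge0_fin_numE; last by apply: integral_ge0 => t Dt; rewrite lee_fin; apply: g0.
apply: le_lt_trans hc; exact: mono_int.
Qed.

Lemma Rint_le (f g : R -> R) M : 0 <= M -> (forall t, `[0, 2 * pi] t -> 0 <= f t) ->
  (forall t, `[0, 2 * pi] t -> f t <= g t) -> (forall t, `[0, 2 * pi] t -> g t <= M) ->
  \int[mu]_(t in `[0, 2 * pi]) f t <= \int[mu]_(t in `[0, 2 * pi]) g t.
Proof.
move=> M0 f0 fg gM.
have g0 : forall t, `[0, 2 * pi] t -> 0 <= g t by move=> t Dt; apply: le_trans (f0 t Dt) (fg t Dt).
rewrite /Rintegral fine_le //.
- apply: (@int_fin f M) => // t Dt; exact: le_trans (fg t Dt) (gM t Dt).
- exact: (@int_fin g M).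
- exact: mono_int.
Qed.

Lemma Rint_leM (g : R -> R) M : 0 <= M -> (forall t, `[0, 2 * pi] t -> 0 <= g t) ->
  (forall t, `[0, 2 * pi] t -> g t <= M) ->
  \int[mu]_(t in `[0, 2 * pi]) g t <= M * (2 * pi).
Proof.
move=> M0 g0 gM.
rewrite -[X in M * X]mu02 -Rintegral_cst //.
apply: (@Rint_le g (fun=> M) M) => //.
Qed.

End Helpers.

Section Fexp_facts.
Variable R : realType.
Notation mu := (@lebesgue_measure R).
Local Open Scope classical_set_scope.
Variables (b P : R).
Hypothesis b1 : 1 < b.
Hypothesis P0 : 0 <= P.

Let lnb0 : 0 < ln b. Proof. exact: ln_gt0. Qed.

Lemma logb_ge0 (v : R) : 1 <= v -> 0 <= logb b v.
Proof. by move=> v1; rewrite /logb divr_ge0 // ?ln_ge0 // ltW. Qed.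

Lemma F0_ge0 x y : 0 <= Fexp b P 0 x y.
Proof.
rewrite /= logb_ge0 //; rewrite lerDl; apply: mulr_ge0 => //; apply: addr_ge0; exact: sqr_ge0.
Qed.

Lemma circ_bound (x y t : R) : (x + cos t) ^+ 2 + (y + sin t) ^+ 2 <= 2 * (x ^+ 2 + y ^+ 2) + 2.
Proof.
have e := cos2Dsin2 t.
have h1 := sqr_ge0 (x - cos t). have h2 := sqr_ge0 (y - sin t).
nra.
Qed.

Lemma cf0 (x y : R) : continuous (fun t : R => Fexp b P 0 (x + cos t) (y + sin t)).
Proof. by rewrite /= /logb; apply: cM; [exact: clncirc | exact: cC]. Qed.

Lemma CM_logb (x y : R) :
  2 * pi * Fexp b P 0 x y <= \int[mu]_(t in `[0, 2 * pi]) Fexp b P 0 (x + cos t) (y + sin t).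
Proof.
rewrite /= /logb.
rewrite RintegralZr //; last by apply: cint; exact: clncirc.
have [c [c0 c1 ceq cr]] := c_exists x y P0.
have h := CM_alg P0 c0 c1 ceq cr.
rewrite mulrA ler_pM2r ?invr_gt0 //.
Qed.

Lemma Fexp_bounds i : (forall x y, Fexp b P 0 x y <= Fexp b P i x y) /\
  (forall K, exists M, 0 <= M /\ forall x y, x ^+ 2 + y ^+ 2 <= K -> Fexp b P i x y <= M).
Proof.
have p0 := @pi_gt0 R.
elim: i => [|i [IH1 IH2]].
  split; first by move=> x y; exact: lexx.
  move=> K; exists (logb b (1 + (Num.max K 0) * P)); split.
    by apply: logb_ge0; rewrite lerDl; apply: mulr_ge0 => //; rewrite le_max lexx orbT.
  move=> x y hK.
  have h1 : 0 < 1 + (x ^+ 2 + y ^+ 2) * P.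
    apply: lt_le_trans ltr01 _; rewrite lerDl; apply: mulr_ge0 => //; apply: addr_ge0; exact: sqr_ge0.
  have h2 : 0 < 1 + Num.max K 0 * P.
    by apply: lt_le_trans ltr01 _; rewrite lerDl; apply: mulr_ge0 => //; rewrite le_max lexx orbT.
  rewrite /= /logb ler_pM2r ?invr_gt0 // ler_ln ?posrE //.
  by rewrite lerD2l ler_wpM2r // le_max hK.
split.
  move=> x y.
  have [M [M0 HM]] := IH2 (2 * (x ^+ 2 + y ^+ 2) + 2).
  rewrite [Fexp b P i.+1 x y]/=.
  apply: (le_trans _ (_ : (2 * pi)^-1 * \int[mu]_(t in `[0, 2 * pi]) Fexp b P 0 (x + cos t) (y + sin t) <= _)).
    by rewrite ler_pdivlMl ?mulr_gt0 //; exact: CM_logb.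
  rewrite ler_pM2l ?invr_gt0 ?mulr_gt0 //.
  apply: (Rint_le (M:=M)) => // t _; [exact: F0_ge0 | apply: HM; exact: circ_bound].
move=> K; have [M [M0 HM]] := IH2 (2 * K + 2).
exists M; split => // x y hK.
rewrite [Fexp b P i.+1 x y]/=.
rewrite ler_pdivrMl ?mulr_gt0 // [X in _ <= X]mulrC.
apply: Rint_leM => // t _.
- exact: le_trans (F0_ge0 _ _) (IH1 _ _).
- apply: HM; apply: le_trans (circ_bound x y t) _; by rewrite lerD2r ler_pM2l.
Qed.

Lemma Rbar1 : Rbar b P 1 = logb b (1 + P).
Proof.
rewrite /Rbar /=.
have -> : \int[mu]_(t in `[0, 2 * pi]) logb b (1 + ((0 + cos t) ^+ 2 + (0 + sin t) ^+ 2) * P) =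
          \int[mu]_(t in `[0, 2 * pi]) logb b (1 + P).
  by apply: eq_Rintegral => t _; rewrite !add0r cos2Dsin2 mul1r.
rewrite Rintegral_cst // mu02 mulrC -mulrA mulfV ?mulr1 //.
by apply: lt0r_neq0; rewrite mulr_gt0 // pi_gt0.
Qed.

Lemma Rbar_mono k : (1 <= k)%N -> Rbar b P 1 <= Rbar b P k.
Proof.
case: k => // k _.
have p0 := @pi_gt0 R.
rewrite /Rbar [Fexp b P k.+1 0 0]/= [Fexp b P 1 0 0]/=.
rewrite ler_pM2l ?invr_gt0 ?mulr_gt0 //.
have [IH1 IH2] := Fexp_bounds k.
have [M [M0 HM]] := IH2 (2 * (0 ^+ 2 + 0 ^+ 2) + 2).
apply: (Rint_le (M:=M)) => // t _.
- exact: F0_ge0.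
- exact: IH1.
- apply: HM; exact: circ_bound.
Qed.

End Fexp_facts.

Unset Implicit Arguments.

Theorem corollary2 (R : realType) (b : R) (L : nat) (P pB : R) :
  1 < b -> (1 <= L)%N -> 0 <= P -> 0 <= pB <= 1 ->
  ((prob_alpha_ge1 pB L * Rbar b P 1)%:E <= Rout b P pB L)%E /\
  prob_alpha_ge1 pB L * Rbar b P 1 = (1 - pB ^+ L) * logb b (1 + P).
Proof.
move=> b1 L1 P0 /andP[pB0 pB1].
have hR1 : Rbar b P 1 = logb b (1 + P) by apply: Rbar1.
have pmf0 : forall k, 0 <= binom_pmf L (1 - pB) k.
  move=> k; rewrite /binom_pmf; apply: mulr_ge0; first apply: mulr_ge0.
  - exact: ler0n.
  - by apply: exprn_ge0; lra.
  - by apply: exprn_ge0; lra.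
have palpha : prob_alpha_ge1 pB L = 1 - pB ^+ L.
  rewrite /prob_alpha_ge1.
  have htot : \sum_(k < L.+1) binom_pmf L (1 - pB) k = 1.
    have e : (pB + (1 - pB)) ^+ L = 1 by rewrite addrC subrK expr1n.
    apply: (etrans _ e); rewrite exprDn.
    by apply: eq_bigr => i _; rewrite /binom_pmf subKr -mulrA mulr_natl (mulrC ((1 - pB) ^+ i)).
  rewrite big_ord_recl /= in htot.
  rewrite big_mkcond big_ord_recl /= add0r.
  have -> : \sum_(i < L) (if (0 < lift ord0 i)%N then binom_pmf L (1 - pB) (lift ord0 i) else 0) =
            \sum_(i < L) binom_pmf L (1 - pB) (lift ord0 i).
    by apply: eq_bigr => i _; rewrite lift0.
  have h0 : binom_pmf L (1 - pB) 0 = pB ^+ L.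
    by rewrite /binom_pmf bin0 expr0 subn0 subKr mulr1 mul1r.
  rewrite h0 in htot.
  have -> : \sum_(i < L) binom_pmf L (1 - pB) (lift ord0 i) =
            \sum_(i < L) binom_pmf L (1 - pB) (bump 0 i) by [].
  move: htot; move: (\sum_(i < L) _) (pB ^+ L) => S0 a htot.
  by rewrite -htot addrC addKr.
have r0 : 0 <= Rbar b P 1.
  by rewrite hR1 logb_ge0 // lerDl.
have prate : prob_alpha_ge1 pB L <= prob_rate_ge b P pB L (Rbar b P 1).
  rewrite /prob_rate_ge /prob_alpha_ge1 big_mkcond /=.
  apply: ler_sum => -[[|k] hk] _ /=.
    by apply: mulr_ge0 => //; exact: ler0n.
  have -> : (Rbar b P 1 <= Rbar b P k.+1) by apply: Rbar_mono.
  by rewrite mulr1.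
split; last by rewrite palpha hR1.
apply: (@le_trans _ _ (Rbar b P 1 * prob_rate_ge b P pB L (Rbar b P 1))%:E).
  by rewrite lee_fin mulrC ler_wpM2l.
by apply: ereal_sup_ubound; exists (Rbar b P 1).
Qed.
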